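(* Graphs $G=(U,\alpha)$ and $H=(V,\beta)$ are weakly disjoint if and only if they are $c$-disjoint for every cost function $c:U\times V\to[0,\infty)$.
   Context: A weight function on finite $U$ is $\alpha:U\times U\to\mathbb{R}$, $\alpha\ge0$, symmetric, summing to $1$; degree $p(u)=\sum_{u'}\alpha(u,u')$; a graph is $(U,\alpha)$. For graphs $(U,\alpha)$, $(V,\beta)$ with degrees $p,q$, a weight joining is a weight function $\gamma$ on $U\times V$ with degree $r(u,v)=\sum_{(u',v')}\gamma((u,v),(u',v'))$ such that $\sum_v r(u,v)=p(u)$, $\sum_u r(u,v)=q(v)$, $p(u)\sum_{\tilde v}\gamma((u,v),(u',\tilde v))=\alpha(u,u')r(u,v)$ and $q(v)\sum_{\tilde u}\gamma((u,v),(\tilde u,v'))=\beta(v,v')r(u,v)$ for all $u,u',v,v'$; a graph joining is $K=(U\times V,\gamma)$ with $\gamma$ a weight joining, with degree function $r_K$. The graphs are weakly disjoint if every graph joining has $r_K(u,v)=p(u)q(v)$. They are $c$-disjoint for $c:U\times V\to[0,\infty)$ if $\min_K\sum_{(u,v)}c(u,v)r_K(u,v)=\sum_{(u,v)}c(u,v)p(u)q(v)$, the minimum over all graph joinings $K$. *)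

(* Defs.v *)
From mathcomp Require Import all_boot all_order all_algebra.
Set Implicit Arguments. Unset Strict Implicit. Unset Printing Implicit Defensive.
Import Order.TTheory GRing.Theory Num.Theory.
Local Open Scope ring_scope.

Section Graphs.
Variable R : realFieldType.

Definition weight_fun (U : finType) (a : U -> U -> R) : Prop :=
  [/\ forall x y, 0 <= a x y,
      forall x y, a x y = a y x
    & \sum_(x : U) \sum_(y : U) a x y = 1].

Definition degree (U : finType) (a : U -> U -> R) (u : U) : R :=
  \sum_(u' : U) a u u'.

Definition weight_joining (U V : finType) (alpha : U -> U -> R)
    (beta : V -> V -> R) (gamma : (U * V)%type -> (U * V)%type -> R) : Prop :=
  [/\ weight_fun gamma,
      forall u, \sum_(v : V) degree gamma (u, v) = degree alpha u,
      forall v, \sum_(u : U) degree gamma (u, v) = degree beta v,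
      forall u u' v, degree alpha u * \sum_(v' : V) gamma (u, v) (u', v')
                     = alpha u u' * degree gamma (u, v)
    & forall u v v', degree beta v * \sum_(u' : U) gamma (u, v) (u', v')
                     = beta v v' * degree gamma (u, v)].

Definition weakly_disjoint (U V : finType) (alpha : U -> U -> R)
    (beta : V -> V -> R) : Prop :=
  forall gamma, weight_joining alpha beta gamma ->
    forall u v, degree gamma (u, v) = degree alpha u * degree beta v.

Definition joining_cost (U V : finType) (c : U -> V -> R)
    (gamma : (U * V)%type -> (U * V)%type -> R) : R :=
  \sum_(u : U) \sum_(v : V) c u v * degree gamma (u, v).

Definition product_cost (U V : finType) (alpha : U -> U -> R)
    (beta : V -> V -> R) (c : U -> V -> R) : R :=
  \sum_(u : U) \sum_(v : V) c u v * (degree alpha u * degree beta v).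

(* c-disjointness: min over graph joinings of the cost equals the product
   cost; "min = m" is unfolded as: m is attained by some joining and is a
   lower bound for the cost of every joining. *)
Definition c_disjoint (U V : finType) (alpha : U -> U -> R)
    (beta : V -> V -> R) (c : U -> V -> R) : Prop :=
  (exists gamma, weight_joining alpha beta gamma /\
       joining_cost c gamma = product_cost alpha beta c)
  /\ (forall gamma, weight_joining alpha beta gamma ->
       product_cost alpha beta c <= joining_cost c gamma).

End Graphs.

(* Main.v *)
Require Import Defs.
From mathcomp Require Import all_boot all_order all_algebra.
From mathcomp Require Import ring.
Import Order.TTheory GRing.Theory Num.Theory.
Local Open Scope ring_scope.
Set Implicit Arguments.

Section Aux.
Variable R : realFieldType.

Lemma sum_ind (U V : finType) (f : U -> V -> R) u0 v0 :
  \sum_(u : U) \sum_(v : V) (((u == u0) && (v == v0))%:R * f u v) = f u0 v0.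
Proof.
rewrite (bigD1 u0) //= [X in _ + X]big1 ?addr0.
  rewrite eqxx /= (bigD1 v0) //= eqxx mul1r [X in _ + X]big1 ?addr0 // => v /negbTE ->.
  by rewrite mul0r.
move=> u /negbTE Hu; apply: big1 => v _; by rewrite Hu mul0r.
Qed.

Lemma sum_deg (U : finType) (a : U -> U -> R) :
  weight_fun a -> \sum_(u : U) degree a u = 1.
Proof. by case. Qed.

Lemma deg_prod (U V : finType) (alpha : U -> U -> R) (beta : V -> V -> R) u v :
  degree (fun x y : (U * V)%type => alpha x.1 y.1 * beta x.2 y.2) (u, v)
  = degree alpha u * degree beta v.
Proof.
rewrite /degree -(pair_big xpredT xpredT (fun u' v' => alpha u u' * beta v v')) /=.
rewrite mulr_suml; apply: eq_bigr => u' _; by rewrite mulr_sumr.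
Qed.

End Aux.

Theorem proposition3p2 (R : realFieldType) (U V : finType)
    (alpha : U -> U -> R) (beta : V -> V -> R) :
  weight_fun alpha -> weight_fun beta ->
  (weakly_disjoint alpha beta <->
   forall c : U -> V -> R, (forall u v, 0 <= c u v) -> c_disjoint alpha beta c).
Proof.
move=> wa wb; have sa := sum_deg wa; have sb := sum_deg wb.
split.
  move=> wd c c0; split; last first.
    move=> g jg; rewrite /joining_cost /product_cost.
    rewrite le_eqVlt; apply/orP; left; apply/eqP; apply: eq_bigr => u _; apply: eq_bigr => v _; by rewrite wd.
  set g := (fun x y : (U * V)%type => alpha x.1 y.1 * beta x.2 y.2).
  have jg : weight_joining alpha beta g.
    case: wa => a0 asym _; case: wb => b0 bsym _.
    split.
    - split.
      + move=> x y; apply: mulr_ge0; [exact: a0 | exact: b0].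
      + move=> x y; by rewrite /g asym bsym.
      + rewrite (eq_bigr (fun x : (U * V)%type => degree g x)) //.
        rewrite (eq_bigr (fun x : (U * V)%type => degree alpha x.1 * degree beta x.2)); last first.
          by case=> u v _; rewrite deg_prod.
        rewrite -(pair_big xpredT xpredT (fun u v => degree alpha u * degree beta v)) /=.
        rewrite (eq_bigr (fun u => degree alpha u * \sum_v degree beta v)); last by move=> u _; rewrite mulr_sumr.
        by rewrite -mulr_suml sa sb mul1r.
    - move=> u; rewrite (eq_bigr (fun v => degree alpha u * degree beta v)).
        by rewrite -mulr_sumr sb mulr1.
      by move=> v _; rewrite deg_prod.
    - move=> v; rewrite (eq_bigr (fun u => degree alpha u * degree beta v)).
        by rewrite -mulr_suml sa mul1r.
      by move=> u _; rewrite deg_prod.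
    - move=> u u' v; rewrite deg_prod /g /= -mulr_sumr.
      rewrite /degree; ring.
    - move=> u v v'; rewrite deg_prod /g /= -mulr_suml.
      rewrite /degree; ring.
  exists g; split => //.
  rewrite /joining_cost /product_cost.
  apply: eq_bigr => u _; apply: eq_bigr => v _; by rewrite deg_prod.
move=> H g jg u0 v0.
set d := fun u v => degree g (u, v) - degree alpha u * degree beta v.
have dge : forall u v, 0 <= d u v.
  move=> u v; rewrite /d subr_ge0.
  have [_ /(_ g jg)] := H (fun u' v' => ((u' == u) && (v' == v))%:R) (fun _ _ => ler0n _ _).
  by rewrite /joining_cost /product_cost !sum_ind.
have ds : \sum_(u : U) \sum_(v : V) d u v = 0.
  rewrite /d (eq_bigr (fun u => \sum_v degree g (u, v) - degree alpha u * \sum_v degree beta v)); last first.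
    by move=> u _; rewrite sumrB mulr_sumr.
  rewrite sumrB -mulr_suml sb mulr1.
  case: jg => _ h1 _ _ _.
  by rewrite (eq_bigr _ (fun u _ => h1 u)) subrr.
have h1 := psumr_eq0P (fun u _ => sumr_ge0 _ (fun v _ => dge u v)) ds.
have h2 := psumr_eq0P (fun v _ => dge u0 v) (h1 u0 isT).
have := h2 v0 isT. rewrite /d /=. move/eqP. rewrite subr_eq0. by move/eqP.
Qed.
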